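(* Let $\Gamma$ be an infinite finitely generated group, $\Gamma\rhd\Gamma_1\rhd\Gamma_2\rhd\cdots$ a nested sequence of finite index normal subgroups with $\bigcap_n\Gamma_n=\{1\}$, $S$ a finite generating set of $\Gamma$, and $\mathcal{G}=\{G_n\}$ with $G_n$ the Cayley graph of $\Gamma/\Gamma_n$ with respect to $S$. Then for every $k\ge1$, $$\frac{d(\Gamma_k)}{|\Gamma:\Gamma_k|}+1\ge c(\mathcal{G}),$$ where $d(\Gamma_k)$ is the minimal number of generators of $\Gamma_k$.
   Context: The Cayley graph of $\Gamma/\Gamma_n$ w.r.t. $S$ has vertex set $\Gamma/\Gamma_n$, with $x\ne y$ adjacent iff $y=sx$ or $x=sy$ for some $s\in S$. A graph sequence is a sequence $\{G_n\}$ of finite simple graphs with uniformly bounded degrees and $|V(G_n)|\to\infty$. For graph sequences with $V(H_n)=V(G_n)$, $\mathcal{H}\prec\mathcal{G}$ means there is an integer $L>0$ with $d_{G_n}(x,y)\le L\,d_{H_n}(x,y)$ for all $n,x,y$ (shortest path metrics); $\mathcal{G}\simeq\mathcal{H}$ means $\mathcal{H}\prec\mathcal{G}$ and $\mathcal{G}\prec\mathcal{H}$. $e(\mathcal{G})=\liminf_n|E(G_n)|/|V(G_n)|$ and $c(\mathcal{G})=\inf_{\mathcal{H}\simeq\mathcal{G}}e(\mathcal{H})$. *)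

(* Defs.v *)
From HB Require Import structures.
From mathcomp Require Import all_boot all_order all_algebra.
From mathcomp Require Import boolp classical_sets reals ereal sequences.
From Stdlib Require List.
Set Implicit Arguments. Unset Strict Implicit. Unset Printing Implicit Defensive.
Import Order.TTheory GRing.Theory Num.Theory.

Section Groups.
Variables (T : Type) (mul : T -> T -> T) (one : T) (inv : T -> T).

Definition is_group : Prop :=
  [/\ (forall x y z, mul x (mul y z) = mul (mul x y) z),
      (forall x, mul one x = x) & (forall x, mul (inv x) x = one)].

Definition infinite_carrier : Prop := forall l : seq T, exists x, ~ List.In x l.

Definition is_subgroup (H : T -> Prop) : Prop :=
  H one /\ forall x y, H x -> H y -> H (mul x (inv y)).

Definition is_normal (H : T -> Prop) : Prop :=
  is_subgroup H /\ forall g x, H x -> H (mul (mul g x) (inv g)).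

Inductive gen (A : T -> Prop) : T -> Prop :=
| gen_one : gen A one
| gen_in x : A x -> gen A x
| gen_inv x : gen A x -> gen A (inv x)
| gen_mul x y : gen A x -> gen A y -> gen A (mul x y).

Definition generates (l : seq T) (H : T -> Prop) : Prop :=
  (forall x, List.In x l -> H x) /\
  (forall x, H x <-> gen (fun y => List.In y l) x).

Definition min_num_gens (H : T -> Prop) (d : nat) : Prop :=
  (exists l : seq T, size l = d /\ generates l H) /\
  (forall l : seq T, generates l H -> (d <= size l)%N).

(* pi : T -> 'I_m identifies 'I_m with the left coset space T/H:
   pi is onto and its fibres are exactly the cosets xH. *)
Definition coset_labelling (H : T -> Prop) (m : nat) (pi : T -> 'I_m) : Prop :=
  (forall i, exists x, pi x = i) /\
  (forall x y, pi x = pi y <-> H (mul (inv x) y)).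

Definition cayley_adj (S : seq T) (m : nat) (pi : T -> 'I_m) : rel 'I_m :=
  fun i j => `[< i <> j /\ exists x s, List.In s S /\
       ((pi x = i /\ pi (mul s x) = j) \/ (pi x = j /\ pi (mul s x) = i)) >].
End Groups.

Section GraphSeq.
Variable N : nat -> nat.
Definition gseq := forall n, rel 'I_(N n).

Definition is_graph_seq (G : gseq) : Prop :=
  [/\ (forall n x, ~~ G n x x),
      (forall n x y, G n x y = G n y x),
      (exists D, forall n x, (#|[set y | G n x y]| <= D)%N) &
      (forall B, exists n0, forall n, (n0 <= n)%N -> (B <= N n)%N)].

Definition dist_le (G : gseq) n (x y : 'I_(N n)) (k : nat) : Prop :=
  exists p : seq 'I_(N n), [&& path (G n) x p, last x p == y & (size p <= k)%N].

(* H ≺ G : exists L > 0, d_G <= L d_H  (infinite distances allowed) *)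
Definition gprec (H G : gseq) : Prop :=
  exists L : nat, (0 < L)%N /\
    forall n (x y : 'I_(N n)) k, dist_le H x y k -> dist_le G x y (L * k).

Definition gequiv (G H : gseq) : Prop := gprec H G /\ gprec G H.

Definition num_edges (G : gseq) n : nat :=
  #|[set p : 'I_(N n) * 'I_(N n) | (p.1 < p.2)%N && G n p.1 p.2]|.

Definition e_of {R : realType} (G : gseq) : \bar R :=
  limn_einf (fun n => ((num_edges G n)%:R / (N n)%:R : R)%:E).

Definition c_of {R : realType} (G : gseq) : \bar R :=
  ereal_inf [set e | exists H : gseq, [/\ is_graph_seq H, gequiv G H & e = e_of H]].
End GraphSeq.

(* Main.v *)
Require Import Defs.
From HB Require Import structures.
From mathcomp Require Import all_boot all_order all_algebra.
From mathcomp Require Import boolp classical_sets reals ereal sequences.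
From mathcomp Require Import topology normedtype ring.
From Stdlib Require List.
Set Implicit Arguments. Unset Strict Implicit. Unset Printing Implicit Defensive.
Import Order.TTheory GRing.Theory Num.Theory.

Section GroupFacts.
Variables (T : Type) (mul : T -> T -> T) (one : T) (inv : T -> T).
Hypothesis hG : is_group mul one inv.

Lemma gA x y z : mul x (mul y z) = mul (mul x y) z.
Proof. by case: hG. Qed.
Lemma g1l x : mul one x = x.
Proof. by case: hG. Qed.
Lemma gVl x : mul (inv x) x = one.
Proof. by case: hG. Qed.
Lemma gcancel x y z : mul x y = mul x z -> y = z.
Proof.
move=> e; rewrite -(g1l y) -(g1l z) -(gVl x) -!gA e //.
Qed.
Lemma gVr x : mul x (inv x) = one.
Proof.
transitivity (mul (mul (inv (inv x)) (inv x)) (mul x (inv x))); first by rewrite gVl g1l.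
by rewrite -gA (gA (inv x)) gVl g1l gVl.
Qed.
Lemma g1r x : mul x one = x.
Proof. by rewrite -(gVl x) gA gVr g1l. Qed.
Lemma gVK x : inv (inv x) = x.
Proof. by apply: (@gcancel (inv x)); rewrite gVr gVl. Qed.
Lemma gKl x y : mul (inv x) (mul x y) = y.
Proof. by rewrite gA gVl g1l. Qed.
Lemma gKr x y : mul x (mul (inv x) y) = y.
Proof. by rewrite gA gVr g1l. Qed.
Lemma gVM x y : inv (mul x y) = mul (inv y) (inv x).
Proof.
apply: (@gcancel (mul x y)); by rewrite gVr -gA gKr gVr.
Qed.
Lemma gV1 : inv one = one.
Proof. by rewrite -(g1r (inv one)) gVl. Qed.

Section Sub.
Variable H : T -> Prop.
Hypothesis hH : is_subgroup mul one inv H.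
Lemma sub1 : H one. Proof. by case: hH. Qed.
Lemma subV x : H x -> H (inv x).
Proof. by case: hH => h1 hm hx; rewrite -(g1l (inv x)); apply: hm. Qed.
Lemma subM x y : H x -> H y -> H (mul x y).
Proof. by case: hH => h1 hm hx hy; rewrite -(gVK y); apply: hm => //; apply: subV. Qed.
Lemma subVM x y : H x -> H (mul x y) -> H y.
Proof. move=> hx hxy; by rewrite -(gKl x y); apply: subM => //; apply: subV. Qed.
Lemma gen_sub (A : T -> Prop) : (forall x, A x -> H x) -> forall x, gen mul one inv A x -> H x.
Proof.
move=> hA x; elim=> [|y /hA //|y _ /subV //|y z _ hy _ hz]; first exact: sub1.
exact: subM.
Qed.
End Sub.

Section Coset.
Variables (H : T -> Prop) (N : nat) (pi : T -> 'I_N).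
Hypothesis hH : is_subgroup mul one inv H.
Hypothesis hpi : coset_labelling mul inv H pi.
Lemma pi_eq x y : pi x = pi y <-> H (mul (inv x) y).
Proof. by case: hpi. Qed.
Lemma pi_mul g x y : pi x = pi y -> pi (mul g x) = pi (mul g y).
Proof.
move/pi_eq=> h; apply/pi_eq; by rewrite gVM -gA gKl.
Qed.
Lemma pi_onto i : exists x, pi x = i.
Proof. by case: hpi. Qed.
Lemma pi_H x y : H y -> pi (mul x y) = pi x.
Proof. move=> hy; apply/pi_eq; rewrite gVM -gA gVl g1r; exact: subV. Qed.
End Coset.
End GroupFacts.

Section Dist.
Unset Implicit Arguments.
Variables (N : nat -> nat) (G : gseq N).
Set Implicit Arguments.

Lemma dist_refl n (x : 'I_(N n)) k : dist_le G x x k.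
Proof. by exists [::]; rewrite /= eqxx. Qed.

Lemma dist_edge n (x y : 'I_(N n)) : G n x y -> dist_le G x y 1.
Proof. by move=> e; exists [:: y]; rewrite /= e eqxx. Qed.

Lemma dist_mono n (x y : 'I_(N n)) a b : (a <= b)%N -> dist_le G x y a -> dist_le G x y b.
Proof.
move=> ab [p /and3P [h1 h2 h3]]; exists p; rewrite h1 h2 /=; exact: leq_trans ab.
Qed.

Lemma dist_trans n (x y z : 'I_(N n)) a b :
  dist_le G x y a -> dist_le G y z b -> dist_le G x z (a + b).
Proof.
move=> [p /and3P [h1 /eqP h2 h3]] [q /and3P [g1 /eqP g2 g3]].
exists (p ++ q); rewrite cat_path last_cat h1 h2 g1 g2 eqxx size_cat /=.
exact: leq_add.
Qed.

Lemma dist_path n (x : 'I_(N n)) p : path (G n) x p -> dist_le G x (last x p) (size p).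
Proof. by move=> h; exists p; rewrite h eqxx leqnn. Qed.

Lemma dist_sym n (x y : 'I_(N n)) k :
  (forall a b, G n a b -> G n b a) -> dist_le G x y k -> dist_le G y x k.
Proof.
move=> hs [p /and3P [h1 /eqP h2 h3]]; subst y.
apply: (dist_mono h3); elim: p x h1 {h3} => [|z p IH] x /=.
  by move=> _; exact: dist_refl.
move=> /andP [e hp]; rewrite -addn1; apply: dist_trans (IH _ hp) _.
exact/dist_edge/hs.
Qed.

Lemma gprec_of_edges (H : gseq N) L : (0 < L)%N ->
  (forall n (x y : 'I_(N n)), H n x y -> dist_le G x y L) -> gprec H G.
Proof.
move=> L0 he; exists L; split=> // n x y k [p /and3P [h1 /eqP h2 h3]]; subst y.
apply: (dist_mono (leq_mul (leqnn L) h3)).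
elim: p x h1 {h3} => [|z p IH] x /=; first by move=> _; exact: dist_refl.
move=> /andP [e hp]; rewrite mulnS; apply: dist_trans (he _ _ _ e) (IH _ hp).
Qed.
End Dist.

Lemma In_map_nth (T : Type) (x0 x : T) (s : seq T) :
  List.In x s -> exists i : 'I_(size s), nth x0 s i = x.
Proof.
elim: s => [//|y s IH] /= [->|/IH [i hi]]; first by exists ord0.
by exists (lift ord0 i).
Qed.

Lemma nth_In (T : Type) (x0 : T) (s : seq T) (i : nat) : (i < size s)%N -> List.In (nth x0 s i) s.
Proof.
elim: s i => [//|y s IH] [|i] /=; first by left.
by move=> h; right; apply: IH.
Qed.

Lemma mem_map_In (T : Type) (U : eqType) (f : T -> U) (s : seq T) x :
  List.In x s -> f x \in map f s.
Proof.
elim: s => [//|y s IH] /= [->|/IH h]; first by rewrite inE eqxx.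
by rewrite inE h orbT.
Qed.

Lemma In_map_mem (T : eqType) (U : Type) (f : T -> U) (s : seq T) x :
  x \in s -> List.In (f x) (map f s).
Proof.
elim: s => [//|y s IH] /=; rewrite inE => /orP [/eqP ->|/IH h]; [by left|by right].
Qed.

Lemma bound_fin (I : finType) (P : I -> nat -> Prop) :
  (forall i r r', (r <= r')%N -> P i r -> P i r') ->
  (forall i, exists r, P i r) -> exists r, forall i, P i r.
Proof.
move=> mono h; pose f i := proj1_sig (cid (h i)).
exists (\max_i f i) => i; apply: (mono i (f i)); first by apply: (leq_bigmax i).
exact: (proj2_sig (cid (h i))).
Qed.

Lemma card_rel_le (N : nat) (G : rel 'I_N) a (L : seq 'I_N) :
  (forall b, G a b -> b \in L) -> (#|[set b | G a b]| <= size L)%N.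
Proof.
move=> h; apply: leq_trans (card_size L).
apply: subset_leq_card; apply/fintype.subsetP => b; rewrite inE => /h.
done.
Qed.

Section Main.
Variables (R : realType) (T : Type) (mul : T -> T -> T) (one : T) (inv : T -> T)
  (Gam : nat -> T -> Prop) (S : seq T) (m : nat -> nat).
Unset Implicit Arguments.
Variable (pi : forall n, T -> 'I_(m n)).
Set Implicit Arguments.
Hypotheses (hG : is_group mul one inv) (hinf : infinite_carrier T)
  (hnorm : forall n, is_normal mul one inv (Gam n))
  (hnest : forall n x, Gam n.+1 x -> Gam n x)
  (hint : forall x, (forall n, Gam n x) -> x = one)
  (hgenS : forall x, gen mul one inv (fun y => List.In y S) x)
  (hlab : forall n, coset_labelling mul inv (Gam n) (pi n)).
Variables (k d : nat) (l : seq T).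
Hypotheses (hl : size l = d) (hgl : generates mul one inv l (Gam k)).

Local Notation K := (Gam k).
Local Notation "x * y" := (mul x y).

Lemma hsub n : is_subgroup mul one inv (Gam n).
Proof. by case: (hnorm n). Qed.

Lemma Gam_nest n n' x : (n <= n')%N -> Gam n' x -> Gam n x.
Proof.
move=> /subnK <-; elim: (n' - n)%N => [//|j IH] /= h; apply: IH; exact: hnest.
Qed.

Definition rep n (j : 'I_(m n)) : T := proj1_sig (cid (pi_onto (hlab n) j)).
Lemma pi_rep n j : pi n (rep j) = j.
Proof. exact: (proj2_sig (cid (pi_onto (hlab n) j))). Qed.

Lemma pieq n x y : pi n x = pi n y <-> Gam n (inv x * y).
Proof. exact: (pi_eq (hlab n)). Qed.

Lemma pimul n g x y : pi n x = pi n y -> pi n (g * x) = pi n (g * y).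
Proof. exact: (pi_mul hG (hlab n)). Qed.

Lemma pi_rep_eq n x : pi n (rep (pi n x)) = pi n x.
Proof. exact: pi_rep. Qed.

Definition t (c : 'I_(m k)) : T := rep c.

Definition tA n (j : 'I_(m n)) (i : 'I_d) : 'I_(m n) := pi n (nth one l i * rep j).
Definition tB n (j : 'I_(m n)) : 'I_(m n) := pi n (inv (t (pi k (rep j))) * rep j).
Definition ends n (a b j j' : 'I_(m n)) := (a = j /\ b = j') \/ (a = j' /\ b = j).
Definition Hsp n (a b : 'I_(m n)) : Prop := a <> b /\ exists j,
  (K (rep j) /\ exists i : 'I_d, ends a b j (tA j i)) \/ (~ K (rep j) /\ ends a b j (tB j)).

Definition Gc : gseq m := fun n => cayley_adj mul S (pi n).
Definition Hc : gseq m := fun n =>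
  if (n < k)%N then cayley_adj mul S (pi n) else fun a b => `[< Hsp a b >].
Arguments Hc : clear implicits.
Arguments Gc : clear implicits.


Lemma cay_sym n (a b : 'I_(m n)) : cayley_adj mul S (pi n) a b -> cayley_adj mul S (pi n) b a.
Proof.
move=> /asboolP [ne [x [s [hs h]]]]; apply/asboolP; split; first by move=> e; apply: ne.
by exists x, s; split=> //; case: h => h; [right|left].
Qed.

Lemma cay_irr n (a : 'I_(m n)) : ~~ cayley_adj mul S (pi n) a a.
Proof. by apply/negP => /asboolP []. Qed.

Lemma Hsp_sym n (a b : 'I_(m n)) : Hsp a b -> Hsp b a.
Proof.
case=> ne [j h]; split; first by move=> e; apply: ne.
have es : forall j', ends a b j j' -> ends b a j j'.
  by move=> j' [[-> ->]|[-> ->]]; [right|left].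
exists j; case: h => [[h1 [i hi]]|[h1 hi]].
  by left; split=> //; exists i; apply: es.
by right; split=> //; apply: es.
Qed.

Lemma Hc_sym n (a b : 'I_(m n)) : Hc n a b -> Hc n b a.
Proof.
rewrite /Hc; case: ifP => _; first exact: cay_sym.
by move=> /asboolP h; apply/asboolP; apply: Hsp_sym.
Qed.

Lemma Hc_irr n (a : 'I_(m n)) : ~~ Hc n a a.
Proof.
rewrite /Hc; case: ifP => _; first exact: cay_irr.
by apply/negP => /asboolP [].
Qed.

Lemma cay_nbr n (a b : 'I_(m n)) : cayley_adj mul S (pi n) a b ->
  b \in [seq pi n (s * rep a) | s <- S] ++ [seq pi n (inv s * rep a) | s <- S].
Proof.
move=> /asboolP [ne [x [s [hs [[ea eb]|[eb ea]]]]]]; rewrite mem_cat.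
  have -> : b = pi n (s * rep a) by rewrite -eb; apply: pimul; rewrite pi_rep ea.
  by apply/orP; left; apply: (mem_map_In (fun s => pi n (s * rep a))).
have -> : b = pi n (inv s * rep a).
  by rewrite -eb -{1}(gKl hG s x); apply: pimul; rewrite pi_rep ea.
by apply/orP; right; apply: (mem_map_In (fun s => pi n (inv s * rep a))).
Qed.

Lemma Hsp_nbr n (a b : 'I_(m n)) : Hsp a b ->
  b \in [seq tA a i | i <- enum 'I_d] ++ [:: tB a] ++
        [seq pi n (inv (nth one l i) * rep a) | i : 'I_d <- enum 'I_d] ++
        [seq pi n (t c * rep a) | c <- enum 'I_(m k)].
Proof.
move=> [ne [j [[_ [i [[ea eb]|[ea eb]]]]|[_ [[ea eb]|[ea eb]]]]]]; rewrite !mem_cat.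
- by subst; rewrite map_f ?mem_enum.
- apply/orP; right; apply/orP; right; apply/orP; left.
  have -> : b = pi n (inv (nth one l i) * rep a).
    rewrite eb -{1}(pi_rep j) -{1}(gKl hG (nth one l i) (rep j)); apply: pimul.
    by rewrite ea pi_rep.
  by rewrite (map_f (fun i : 'I_d => pi n (inv (nth one l i) * rep a))) ?mem_enum.
- by subst; rewrite inE eqxx orbT.
- apply/orP; right; apply/orP; right; apply/orP; right.
  have -> : b = pi n (t (pi k (rep j)) * rep a).
    rewrite eb -{1}(pi_rep j) -{1}(gKr hG (t (pi k (rep j))) (rep j)); apply: pimul.
    by rewrite ea pi_rep.
  by rewrite (map_f (fun c => pi n (t c * rep a))) ?mem_enum.
Qed.

Lemma Hc_deg : exists D, forall n (x : 'I_(m n)), (#|[set y | Hc n x y]| <= D)%N.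
Proof.
exists (size S + size S + (d + (1 + (d + m k))))%N => n x.
rewrite /Hc; case: ifP => _.
  apply: leq_trans (card_rel_le (@cay_nbr n x)) _.
  by rewrite size_cat !size_map leq_addr.
apply: leq_trans (card_rel_le (G := fun a b => `[< Hsp a b >]) (a := x) _) _.
  by move=> b /asboolP; apply: Hsp_nbr.
by rewrite !size_cat !size_map -!enumT !size_enum_ord leq_addl.
Qed.

Definition proj n n' (j : 'I_(m n')) : 'I_(m n) := pi n (rep j).

Lemma proj_pi n n' x : (n <= n')%N -> proj n (pi n' x) = pi n x.
Proof.
move=> le; rewrite /proj; apply/pieq; apply: (Gam_nest le); apply/pieq.
exact: pi_rep.
Qed.

Lemma proj_onto n n' : (n <= n')%N -> [set: 'I_(m n)] = [set proj n j | j in [set: 'I_(m n')]].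
Proof.
move=> le; apply/setP => i; rewrite inE; symmetry; apply/imsetP.
have [x <-] := pi_onto (hlab n) i.
by exists (pi n' x); rewrite ?inE ?proj_pi.
Qed.

Lemma m_mono n n' : (n <= n')%N -> (m n <= m n')%N.
Proof.
move=> le; rewrite -{1}(card_ord (m n)) -cardsT (proj_onto le).
by apply: leq_trans (leq_imset_card _ _) _; rewrite cardsT card_ord.
Qed.

Lemma m_grow N : exists N', (m N < m N')%N.
Proof.
have [x hx] := hinf [seq rep j | j <- enum 'I_(m N)].
set y := rep (pi N x).
have hy : List.In y [seq rep j | j <- enum 'I_(m N)] by apply: In_map_mem; rewrite mem_enum.
have ne : x <> y by move=> e; apply: hx; rewrite e.
have z1 : inv x * y <> one.
  by move=> e; apply: ne; rewrite -(gKr hG x y) e (g1r hG).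
have [N' hN'] : exists N', ~ Gam N' (inv x * y).
  by apply/existsNP => h; apply: z1; apply: hint.
have zN : Gam N (inv x * y) by apply/pieq; rewrite pi_rep.
have lt : (N < N')%N.
  by rewrite ltnNge; apply/negP => le; apply: hN'; apply: Gam_nest le zN.
exists N'; rewrite -{1}(card_ord (m N)) -cardsT (proj_onto (ltnW lt)).
rewrite -[X in (_ < X)%N](card_ord (m N')) -cardsT.
rewrite ltn_neqAle leq_imset_card andbT; apply/negP => /imset_injP inj.
apply: hN'; apply/pieq; apply: inj; rewrite ?inE //.
by rewrite !proj_pi ?(ltnW lt) // pi_rep.
Qed.

Lemma m_unb B : exists n0, forall n, (n0 <= n)%N -> (B <= m n)%N.
Proof.
elim: B => [|B [n0 IH]]; first by exists 0%N.
have [N' hN'] := m_grow n0.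
exists (maxn n0 N') => n le; apply: (leq_ltn_trans (IH n0 (leqnn n0))).
apply: leq_trans hN' _.
by apply: m_mono; apply: leq_trans le; apply: leq_maxr.
Qed.

Lemma G_word w : exists r, forall n y, dist_le Gc (pi n y) (pi n (w * y)) r.
Proof.
elim: (hgenS w) => [|s hs|w' _ [r IH]|w1 w2 _ [r1 IH1] _ [r2 IH2]].
- by exists 0%N => n y; rewrite (g1l hG); apply: dist_refl.
- exists 1%N => n y; have [e|ne] := eqVneq (pi n y) (pi n (s * y)).
    by rewrite -e; apply: dist_refl.
  apply: dist_edge; apply/asboolP; split; first by apply/eqP.
  by exists y, s; split=> //; left.
- exists r => n y; apply: dist_sym; first by move=> a b; apply: cay_sym.
  by have := IH n (inv w' * y); rewrite (gKr hG).
- exists (r2 + r1)%N => n y; apply: dist_trans (IH2 n y) _.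
  by rewrite -(gA hG); apply: IH1.
Qed.

Lemma G_words (I : finType) (f : I -> T) : exists r, forall i n y,
  dist_le Gc (pi n y) (pi n (f i * y)) r.
Proof.
apply: (bound_fin (P := fun i r => forall n y, dist_le Gc (pi n y) (pi n (f i * y)) r)).
  by move=> i r r' le h n y; apply: dist_mono le (h n y).
by move=> i; apply: G_word.
Qed.


Lemma Gc_sym n (a b : 'I_(m n)) (r : nat) : dist_le Gc a b r -> dist_le Gc b a r.
Proof. by apply: dist_sym => x y; apply: cay_sym. Qed.

Lemma HG : gprec Hc Gc.
Proof.
have [rA hA] := G_words (fun i : 'I_d => nth one l i).
have [rB hB] := G_words (fun c : 'I_(m k) => inv (t c)).
apply: (gprec_of_edges (L := (1 + rA + rB)%N)) => // n a b.
rewrite /Hc; case: ifP => _.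
  by move=> e; apply: dist_mono (dist_edge e); rewrite -addnA leq_addr.
have ends_d : forall j j' r, dist_le Gc j j' r -> (r <= 1 + rA + rB)%N -> ends a b j j' ->
    dist_le Gc a b (1 + rA + rB).
  move=> j j' r h le [[-> ->]|[-> ->]]; apply: dist_mono le _ => //.
  exact: Gc_sym.
move=> /asboolP [_ [j [[_ [i hi]]|[_ hi]]]].
  apply: ends_d hi; first by rewrite /tA -{1}(pi_rep j); apply: hA.
  by rewrite addnC addnA leq_addl.
apply: ends_d hi; first by rewrite /tB -{1}(pi_rep j); apply: hB.
by rewrite leq_addl.
Qed.


Lemma Hc_dsym n (a b : 'I_(m n)) (r : nat) : dist_le Hc a b r -> dist_le Hc b a r.
Proof. by apply: dist_sym => x y; apply: Hc_sym. Qed.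

Lemma hsubK : is_subgroup mul one inv K.
Proof. exact: hsub. Qed.

Lemma K_rep n x : (k <= n)%N -> K (rep (pi n x)) <-> K x.
Proof.
move=> le; have h : Gam n (inv x * rep (pi n x)) by apply/pieq; rewrite pi_rep.
have hk := Gam_nest le h.
split=> hx.
  have -> : x = rep (pi n x) * inv (inv x * rep (pi n x)).
    by rewrite (gVM hG) (gVK hG) (gKr hG).
  apply: (subM hG hsubK) => //; exact: (subV hG hsubK).
by rewrite -(gKr hG x (rep (pi n x))); apply: (subM hG hsubK).
Qed.

Lemma Hedge n (a b : 'I_(m n)) : (k <= n)%N -> Hsp a b -> Hc n a b.
Proof. by move=> le h; rewrite /Hc ltnNge le /=; apply/asboolP. Qed.

Definition U (o : option 'I_(m k)) : T := if o is Some c then inv (t c) else one.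
Definition o x : option 'I_(m k) := if `[< K x >] then None else Some (pi k x).
Definition u x := U (o x).

Lemma Ku x : K (u x * x).
Proof.
rewrite /u /o; case: asboolP => hx /=; first by rewrite (g1l hG).
by apply/pieq; rewrite /t pi_rep.
Qed.

Lemma U1 n x : (k <= n)%N -> dist_le Hc (pi n x) (pi n (u x * x)) 1.
Proof.
move=> le; rewrite /u /o; case: asboolP => hx /=.
  by rewrite (g1l hG); apply: dist_refl.
set j := pi n x.
have hkj : pi k (rep j) = pi k x.
  by apply/pieq; apply: (Gam_nest le); apply/pieq; rewrite pi_rep.
have eB : tB j = pi n (inv (t (pi k x)) * x).
  by rewrite /tB hkj; apply: pimul; rewrite pi_rep.
rewrite -eB; have [e|ne] := eqVneq j (tB j); first by rewrite -e; apply: dist_refl.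
apply: dist_edge; apply: Hedge => //; split; first exact/eqP.
exists j; right; split; first by move/(K_rep x le).
by left.
Qed.

Lemma ZA z : gen mul one inv (fun y => List.In y l) z ->
  exists r, forall n, (k <= n)%N -> forall y, K y -> dist_le Hc (pi n y) (pi n (z * y)) r.
Proof.
have lK : forall x, List.In x l -> K x by case: hgl.
elim=> [|g hg|z' hz' [r IH]|z1 z2 g1 [r1 IH1] g2 [r2 IH2]].
- by exists 0%N => n _ y _; rewrite (g1l hG); apply: dist_refl.
- exists 1%N => n le y hy.
  have [i0 hi0] := In_map_nth one hg.
  have i0d : (i0 < d)%N by rewrite -hl.
  set i := Ordinal i0d.
  set j := pi n y.
  have eA : tA j i = pi n (g * y) by rewrite /tA -hi0; apply: pimul; rewrite pi_rep.
  rewrite -eA; have [e|ne] := eqVneq j (tA j i); first by rewrite -e; apply: dist_refl.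
  apply: dist_edge; apply: Hedge => //; split; first exact/eqP.
  exists j; left; split; first by apply/(K_rep y le).
  by exists i; left.
- have Kz : K z' by apply: (gen_sub hG hsubK lK hz').
  exists r => n le y hy; apply: Hc_dsym.
  have := IH n le (inv z' * y); rewrite (gKr hG); apply.
  by apply: (subM hG hsubK) => //; apply: (subV hG hsubK).
- have Kz2 : K z2 by apply: (gen_sub hG hsubK lK g2).
  exists (r2 + r1)%N => n le y hy; apply: dist_trans (IH2 n le y hy) _.
  rewrite -(gA hG); apply: IH1 => //; exact: (subM hG hsubK).
Qed.


Definition zz (p : option 'I_(m k) * 'I_(size S) * option 'I_(m k)) : T :=
  U p.1.1 * nth one S p.1.2 * inv (U p.2).

Lemma GH : gprec Gc Hc.
Proof.
have [r hr] : exists r, forall p, K (zz p) -> forall n, (k <= n)%N ->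
    forall y, K y -> dist_le Hc (pi n y) (pi n (zz p * y)) r.
  apply: (bound_fin (P := fun p r => K (zz p) -> forall n, (k <= n)%N ->
    forall y, K y -> dist_le Hc (pi n y) (pi n (zz p * y)) r)).
- by move=> p r r' le h hK n len y hy; apply: dist_mono le (h hK n len y hy).
- move=> p; case: (asboolP (K (zz p))) => hK; last by exists 0%N.
  have [r hr] := ZA ((proj2 hgl _).1 hK).
  by exists r => _.
apply: (gprec_of_edges (L := (1 + r + 1 + 1)%N)) => // n a b.
rewrite {1}/Gc; case: (ltnP n k) => [lt e|le].
  apply: dist_mono (dist_edge (G := Hc) _) => //; by rewrite /Hc lt.

have main : forall x s, List.In s S -> dist_le Hc (pi n x) (pi n (s * x)) (1 + r + 1).
  move=> x s hs; have [i hi] := In_map_nth one hs.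
  set y := u x * x; set y' := u (s * x) * (s * x).
  pose p := (o (s * x), i, o x).
  have ez : zz p * y = y'.
    rewrite /zz /y /y' /p /u /= hi -!(gA hG) (gKl hG) //.
  have Kz : K (zz p).
    have -> : zz p = y' * inv y by rewrite -ez -(gA hG) (gVr hG) (g1r hG).
    by apply: (subM hG hsubK); [apply: Ku | apply: (subV hG hsubK); apply: Ku].
  apply: dist_trans (Hc_dsym (U1 _ le)).
  apply: dist_trans (U1 _ le) _.
  by rewrite -/y -/y' -ez; apply: hr => //; apply: Ku.
move=> /asboolP [_ [x [s [hs [[<- <-]|[<- <-]]]]]].
  by apply: (dist_mono _ (main x s hs)); rewrite leq_addr.
by apply: Hc_dsym; apply: (dist_mono _ (main x s hs)); rewrite leq_addr.
Qed.


Definition op n (a b : 'I_(m n)) := if (a < b)%N then (a, b) else (b, a).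

Lemma op_ends n (a b j j' : 'I_(m n)) : (a < b)%N -> ends a b j j' -> op j j' = (a, b).
Proof.
move=> lt [[ea eb]|[ea eb]]; subst a b; rewrite /op; first by rewrite lt.
by rewrite ltnNge (ltnW lt).
Qed.

Definition Aset n := [set j : 'I_(m n) | `[< K (rep j) >]].

Lemma edges_le n : (k <= n)%N -> (num_edges Hc n <= #|Aset n| * d + m n)%N.
Proof.
move=> le; rewrite /num_edges.
pose f1 (q : 'I_(m n) * 'I_d) := op q.1 (tA q.1 q.2).
pose f2 (j : 'I_(m n)) := op j (tB j).
have sub : [set p : 'I_(m n) * 'I_(m n) | (p.1 < p.2)%N && Hc n p.1 p.2] \subset
    (f1 @: finset.setX (Aset n) [set: 'I_d]) :|: (f2 @: [set: 'I_(m n)]).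
  apply/fintype.subsetP => -[a b]; rewrite inE /= => /andP [lt].
  rewrite /Hc ltnNge le /= => /asboolP [_ [j [[hj [i hi]]|[hj hi]]]]; rewrite inE.
    apply/orP; left; apply/imsetP; exists (j, i); first by rewrite finset.in_setX finset.in_setT andbT /Aset inE; apply/asboolP.
    by rewrite /f1 /= (op_ends lt hi).
  apply/orP; right; apply/imsetP; exists j; first by rewrite inE.
  by rewrite /f2 (op_ends lt hi).
apply: leq_trans (subset_leq_card sub) _.
apply: leq_trans (leq_card_setU _ _) _.
apply: leq_add.
  by apply: leq_trans (leq_imset_card _ _) _; rewrite cardsX cardsT card_ord.
by apply: leq_trans (leq_imset_card _ _) _; rewrite cardsT card_ord.
Qed.

Lemma Aset_le n : (k <= n)%N -> (#|Aset n| * m k <= m n)%N.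
Proof.
move=> le.
pose F (q : 'I_(m n) * 'I_(m k)) := pi n (t q.2 * rep q.1).
have inj : {in finset.setX (Aset n) [set: 'I_(m k)] &, injective F}.
  move=> [j c] [j' c']; rewrite !inE /= !andbT => /asboolP hj /asboolP hj'.
  rewrite /F /= => /pieq e.
  have ek := Gam_nest le e.
  rewrite (gVM hG) in e ek.
  have ec : c = c'.
    rewrite -(pi_rep c) -(pi_rep c'); apply/pieq.
    have -> : inv (t c) * t c' =
      rep j * ((inv (rep j) * inv (t c)) * (t c' * rep j')) * inv (rep j').
      by rewrite !(gA hG) (gVr hG) (g1l hG) -!(gA hG) (gVr hG) (g1r hG).
    apply: (subM hG hsubK); last exact: (subV hG hsubK).
    by apply: (subM hG hsubK).
  subst c'; congr (_, _).
  rewrite -(pi_rep j) -(pi_rep j'); apply/pieq.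
  by move: e; rewrite -(gA hG) (gA hG (inv (t c))) (gVl hG) (g1l hG).
have <- : #|finset.setX (Aset n) [set: 'I_(m k)]| = (#|Aset n| * m k)%N.
  by rewrite cardsX cardsT card_ord.
rewrite -(card_in_imset inj); apply: leq_trans (max_card _) _; by rewrite card_ord.
Qed.


Local Open Scope ring_scope.
Lemma liminf_le (u' : (\bar R)^nat) (b : \bar R) k0 :
  (forall n, (k0 <= n)%N -> (u' n <= b)%E) -> (limn_einf u' <= b)%E.
Proof.
move=> hu; rewrite limn_einf_lim.
rewrite (cvg_lim (@ereal_normedtype.ereal_hausdorff R) (@cvg_einfs_sup R u')).
apply: ge_ereal_sup => _ [n _ <-].
rewrite /einfs /=.
apply: (@le_trans _ _ (u' (maxn n k0))); last by apply: hu; exact: leq_maxr.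
apply: ereal_inf_lbound; exists (maxn n k0) => //; exact: leq_maxl.
Qed.

Lemma m_pos n : (0 < m n)%N.
Proof. by have := ltn_ord (pi n one); apply: leq_ltn_trans. Qed.

Lemma final : (c_of (fun n => cayley_adj mul S (pi n)) <=
   ((d%:R / (m k)%:R + 1 : R))%:E)%E.
Proof.
apply: (@le_trans _ _ (e_of Hc)).
  apply: ereal_inf_lbound; exists Hc; split => //; last by split; [apply: HG|apply: GH].
  split.
  - exact: Hc_irr.
  - by move=> n x y; apply/idP/idP; apply: Hc_sym.
  - exact: Hc_deg.
  - exact: m_unb.
apply: (liminf_le (k0 := k)) => n le; rewrite lee_fin.
have mk0 := m_pos k; have mn0 := m_pos n.
have hnat : (num_edges Hc n * m k <= d * m n + m n * m k)%N.
  apply: leq_trans (leq_mul (edges_le le) (leqnn (m k))) _.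
  rewrite mulnDl leq_add2r mulnAC mulnC; apply: leq_mul => //; exact: Aset_le.
rewrite ler_pdivrMr ?ltr0n // -(@ler_pM2r _ (m k)%:R) ?ltr0n //.
have -> : (d%:R / (m k)%:R + 1) * (m n)%:R * (m k)%:R = ((d * m n + m n * m k)%N%:R : R).
  have nz : (m k)%:R != 0 :> R by rewrite pnatr_eq0 -lt0n.
  by rewrite natrD !natrM; field.
by rewrite -natrM ler_nat.
Qed.

End Main.

Unset Implicit Arguments.
Theorem lemma3 (R : realType) (T : Type) (mul : T -> T -> T) (one : T) (inv : T -> T)
  (Gam : nat -> T -> Prop) (S : seq T) (m : nat -> nat) (pi : forall n, T -> 'I_(m n)) :
  is_group mul one inv ->
  infinite_carrier T ->
  (forall n, is_normal mul one inv (Gam n)) ->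
  (forall n x, Gam n.+1 x -> Gam n x) ->
  (forall x, (forall n, Gam n x) -> x = one) ->
  (forall x, gen mul one inv (fun y => List.In y S) x) ->
  (forall n, coset_labelling mul inv (Gam n) (pi n)) ->
  forall (k d : nat), min_num_gens mul one inv (Gam k) d ->
  (c_of (fun n => cayley_adj mul S (pi n)) <= ((d%:R / (m k)%:R + 1 : R))%:E)%E.
Proof.
move=> hG hinf hnorm hnest hint hgenS hlab k d [[l [hl hgl]] _].
exact: (final R hG hinf hnorm hnest hint hgenS hlab hl hgl).
Qed.
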